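(* Let $X$ and $Y$ be self-dense (no isolated points), locally connected, compact metric spaces, let $f\colon X\to X$ be an inner-distal homeomorphism, and let $g\colon Y\to Y$ be a homeomorphism which is an extension of $f$ under an inner-light homomorphism $\pi\colon Y\to X$. Then $g$ is inner-distal.
   Context: For a homeomorphism $h\colon Z\to Z$ of a metric space $(Z,d)$, the proximal cell of $z\in Z$ is $\mathcal{P}(z)=\{w\in Z\colon \inf_{n\in\mathbb{Z}} d(h^n(z),h^n(w))=0\}$; $h$ is inner-distal if $\operatorname{Int}\mathcal{P}(z)=\emptyset$ for every $z\in Z$. A homomorphism from $g\colon Y\to Y$ to $f\colon X\to X$ is a continuous surjective map $\pi\colon Y\to X$ with $f\circ\pi=\pi\circ g$; then $g$ is called an extension of $f$ (under $\pi$). A subcontinuum of $Y$ is a non-empty compact connected subset. The map $\pi$ is inner-light if $\operatorname{Int} C=\emptyset$ for every subcontinuum $C\subseteq Y$ such that $\operatorname{Int}\pi(C)=\emptyset$. *)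

(* Defs.v *)
From HB Require Import structures.
From mathcomp Require Import all_boot all_order all_algebra.
From mathcomp Require Import all_classical all_reals all_analysis.
Set Implicit Arguments. Unset Strict Implicit. Unset Printing Implicit Defensive.
Import Order.TTheory GRing.Theory Num.Theory.
Local Open Scope classical_set_scope.
Local Open Scope ring_scope.

Section Defs.
Context {R : realType}.

Definition self_dense (T : topologicalType) := isolated (@setT T) = set0.

Definition locally_connected (T : topologicalType) :=
  forall (x : T) (U : set T), nbhs x U ->
    exists V : set T, [/\ open V, V x, connected V & V `<=` U].

Definition homeomorphism (T : topologicalType) (h hinv : T -> T) :=
  [/\ continuous h, continuous hinv, cancel h hinv & cancel hinv h].

Definition iterz (T : Type) (h hinv : T -> T) (n : int) : T -> T :=
  match n with
  | Posz k => iter k h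
  | Negz k => iter k.+1 hinv
  end.

Definition proximal_cell (T : metricType R) (h hinv : T -> T) (z : T) : set T :=
  [set w | inf (range (fun n : int =>
                  mdist (iterz h hinv n z) (iterz h hinv n w))) = 0].

Definition inner_distal (T : metricType R) (h hinv : T -> T) :=
  forall z : T, interior (proximal_cell h hinv z) = set0.

Definition homomorphism (Y X : topologicalType) (g : Y -> Y) (f : X -> X)
  (pi : Y -> X) :=
  [/\ continuous pi, (forall x, exists y, pi y = x) & f \o pi = pi \o g].

Definition subcontinuum (T : topologicalType) (C : set T) :=
  [/\ C !=set0, compact C & connected C].

Definition inner_light (Y X : topologicalType) (pi : Y -> X) :=
  forall C : set Y, subcontinuum C -> interior (pi @` C) = set0 ->
    interior C = set0.

End Defs.

(* Main.v *)
Require Import Defs.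
From HB Require Import structures.
From mathcomp Require Import all_boot all_order all_algebra.
From mathcomp Require Import all_classical all_reals all_analysis.
Import Order.TTheory GRing.Theory Num.Theory.
Local Open Scope classical_set_scope.
Local Open Scope ring_scope.

Lemma ucont (R : realType) (Y X : metricType R) (p : Y -> X) :
  compact (@setT Y) -> continuous p ->
  forall e : R, 0 < e -> exists2 d : R, 0 < d &
    forall a b, mdist a b < d -> mdist (p a) (p b) < e.
Proof.
move=> cY cp e e0.
suff H : \forall d \near (0:R)^'+, forall x, setT x ->
    (forall y, mdist x y < d -> mdist (p x) (p y) < e).
  have [d [Hd d0]] := filter_ex (filterI H (nbhs_right_gt (0:R))).
  by exists d => // a b ab; exact: (Hd a I b ab).
apply: (proj1 (compact_near_coveringP setT) cY R (at_right (0:R))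
  (fun d x' => forall y, mdist x' y < d -> mdist (p x') (p y) < e)).
- move=> x _.
  have e20 : 0 < e / 2 by rewrite divr_gt0.
  have := cp x; move/(metricType_numDomainType.cvgrPdist_lt) => /(_ _ e20).
  rewrite -metricType_numDomainType.filter_from_mdist_nbhs => -[dl dl0 Hdl].
  have dl20 : 0 < dl / 2 by rewrite divr_gt0.
  exists ([set x' | mdist x x' < dl / 2], [set d | d < dl / 2]).
    split => /=; first by rewrite -metricType_numDomainType.filter_from_mdist_nbhs; exists (dl/2).
    exact: nbhs_right_lt.
  move=> [x' d] [/= xx' dd] y x'y.
  have h1 : mdist (p x) (p x') < e / 2 by apply: Hdl => /=; rewrite (lt_trans xx')// ltr_pdivrMr// ltr_pMr// ltr1n.
  have h2 : mdist (p x) (p y) < e / 2.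
    apply: Hdl => /=; rewrite (le_lt_trans (metric_triangle _ x' _))//.
    by rewrite (splitr dl) ltrD// (lt_trans x'y).
  rewrite (le_lt_trans (metric_triangle _ (p x) _))// (splitr e) ltrD//.
  by rewrite metric_sym.
Qed.

Lemma inf_range0 (R : realType) (S : int -> R) : (forall n, 0 <= S n) ->
  (inf (range S) = 0 <-> forall e, 0 < e -> exists n, S n < e).
Proof.
move=> S0; split.
- move=> H e e0.
  have := @inf_lt R (range S) e; rewrite H => /(_ _ e0) [].
    by exists (S 0); exists 0.
  by move=> _ [n _ <-] ne; exists n.
- move=> H; apply/eqP; rewrite eq_le; apply/andP; split; last first.
    by apply: lb_le_inf; [exists (S 0); exists 0|move=> _ [n _ <-]].
  rewrite leNgt; apply/negP => i0.
  have [n Hn] := H _ i0.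
  have : inf (range S) <= S n.
    by apply: ge_inf; [exists 0 => _ [m _ <-] | exists n].
  by rewrite leNgt Hn.
Qed.

Lemma iterz_comm (Y X : Type) (f finv : X -> X) (g ginv : Y -> Y) (pi : Y -> X) :
  cancel f finv -> cancel ginv g -> f \o pi = pi \o g ->
  forall n y, iterz f finv n (pi y) = pi (iterz g ginv n y).
Proof.
move=> fK gK H.
have H1 y : f (pi y) = pi (g y) by have := congr1 (fun h => h y) H.
have H2 y : finv (pi y) = pi (ginv y).
  by rewrite -{1}(gK y) -H1 fK.
case=> k y /=.
- by elim: k => //= k ->; rewrite H1.
- suff -> : iter k finv (pi y) = pi (iter k ginv y) by rewrite H2.
  by elim: k => //= k ->; rewrite H2.
Qed.

Theorem theorem2p11 (R : realType) (X Y : metricType R)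
  (f finv : X -> X) (g ginv : Y -> Y) (pi : Y -> X) :
  self_dense X -> locally_connected X -> compact (@setT X) ->
  self_dense Y -> locally_connected Y -> compact (@setT Y) ->
  homeomorphism f finv -> inner_distal f finv ->
  homeomorphism g ginv ->
  homomorphism g f pi -> inner_light pi ->
  inner_distal g ginv.
Proof.
move=> _ _ _ _ lcY cY [_ _ fK _] idf [_ _ _ gK] [cpi _ fpi] il z.
apply/seteqP; split => [y Hy|//].
have Psub : pi @` proximal_cell g ginv z `<=` proximal_cell f finv (pi z).
  move=> _ [w Pw <-]; rewrite /proximal_cell /=.
  apply/inf_range0; first by move=> n; exact: mdist_ge0.
  move=> e e0; have [d d0 Hd] := @ucont R Y X pi cY cpi e e0.
  move: Pw; rewrite /proximal_cell /=.
  move=> /(@inf_range0 R _ (fun n => mdist_ge0 _ _)) /(_ d d0) [n Hn]; exists n.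
  by rewrite !(@iterz_comm Y X f finv g ginv pi fK gK fpi); apply: Hd.
have [e e0 He] := proj1 (nbhs_ballP _ _) Hy.
have e20 : 0 < e / 2 by rewrite divr_gt0.
have [V [oV Vy cV sV]] := lcY y _ (nbhsx_ballx y (e/2) e20).
have VC : V `<=` closure V := @subset_closure _ V.
have CP : closure V `<=` proximal_cell g ginv z.
  move=> w /(closureS sV) /(@subset_closure_half _ _ y e e0); exact: He.
have : interior (closure V) = set0.
  apply: il.
    split; first by exists y; exact: VC.
      apply: (@subclosed_compact Y (closure V) setT _ cY) => //.
      exact: closed_closure.
    exact: connected_closure.
  apply/seteqP; split => [x Hx|//].
  rewrite -(idf (pi z)); apply: filterS Hx.
  by move=> _ [w Cw <-]; apply: Psub; exists w => //; exact: CP.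
move=> /seteqP [+ _] => /(_ y); apply.
apply: (filterS VC); apply: open_nbhs_nbhs; split => //.
Qed.
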